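(* Let $f:E\to\mathbb{R}$ be $L$-smooth and $1$-weakly-quasi-convex with respect to a minimizer $x_*$ (in particular, this holds if $f$ is convex and $L$-smooth with minimizer $x_*$). Let Algorithm AGMsDR (either option) be run from $x^0$ for $N\ge1$ steps. Then $$\min_{k=\lceil N/2\rceil,\dots,N}\|\nabla f(y^k)\|_*^2\le\frac{64L^2V(x_*,x^0)}{N^3},\qquad f(x^N)-f(x_* )\le\frac{4LV(x_*,x^0)}{N^2}.$$
   Context: $E$ is a finite-dimensional real vector space with a norm $\|\cdot\|$; $E^*$ is its dual, $\langle g,x\rangle$ denotes the value of $g\in E^*$ at $x\in E$, and $\|g\|_*=\max\{\langle g,x\rangle:\|x\|\le 1\}$. For $g\in E^*$, $g^{\#}$ denotes a (fixed) element $s\in E$ with $\|s\|\le 1$ and $\langle g,s\rangle=\|g\|_*$. A prox-function $d:E\to\mathbb{R}$ is continuously differentiable, convex, $1$-strongly convex with respect to $\|\cdot\|$ (i.e. $d(y)-d(x)-\langle\nabla d(x),y-x\rangle\ge\frac12\|y-x\|^2$ for all $x,y\in E$) and satisfies $\min_E d=0$; its Bregman divergence is $V(x,z)=d(x)-d(z)-\langle\nabla d(z),x-z\rangle$. A function $f:E\to\mathbb{R}$ is $L$-smooth ($L>0$) if it is continuously differentiable and $\|\nabla f(x)-\nabla f(y)\|_*\le L\|x-y\|$ for all $x,y\in E$. A differentiable $f$ with a minimizer $x_*$ is $\gamma$-weakly-quasi-convex ($\gamma\in(0,1]$) if $\gamma(f(x)-f(x_* ))\le\langle\nabla f(x),x-x_*\rangle$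 for all $x\in E$. Algorithm AGMsDR (input $x^0\in E$, and $L$ for Option (a)): set $A_0=0$, $v^0=x^0$, $\psi_0(x)=V(x,x^0)$. For $k=0,1,2,\dots$: 1. Choose $\beta_k\in\arg\min_{\beta\in[0,1]} f(v^k+\beta(x^k-v^k))$ (a global minimizer over the interval) and set $y^k=v^k+\beta_k(x^k-v^k)$. 2. Option (a): $x^{k+1}\in\arg\min_{x\in E}\{f(y^k)+\langle\nabla f(y^k),x-y^k\rangle+\frac L2\|x-y^k\|^2\}$, and $a_{k+1}>0$ solves $\frac{a_{k+1}^2}{A_k+a_{k+1}}=\frac1L$. Option (b): $h_{k+1}\in\arg\min_{h\ge0} f(y^k-h(\nabla f(y^k))^{\#})$, $x^{k+1}=y^k-h_{k+1}(\nabla f(y^k))^{\#}$, and $a_{k+1}$ is the largest solution of $f(y^k)-\frac{a_{k+1}^2}{2(A_k+a_{k+1})}\|\nabla f(y^k)\|_*^2=f(x^{k+1})$. 3. $A_{k+1}=A_k+a_{k+1}$; $\psi_{k+1}(x)=\psi_k(x)+a_{k+1}\{f(y^k)+\langle\nabla f(y^k),x-y^k\rangle\}$; $v^{k+1}=\arg\min_{x\in E}\psi_{k+1}(x)$. It is assumed that all the minima in the algorithm are attained, and that $\nabla f(y^k)\neq 0$ for all iterations considered (otherwise $y^k$ is a stationary point and the method stops). *)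

(* Defs.v *)
From Stdlib Require Import Reals ClassicalEpsilon.
From mathcomp Require Import ssreflect ssrfun ssrbool eqtype ssrnat fintype bigop.
Set Implicit Arguments. Unset Strict Implicit.
Local Open Scope R_scope.

(* E = R^n (every n-dimensional real vector space is isomorphic to it);
   E^* is identified with R^n through the pairing <g,x> = sum_i g_i x_i. *)
Definition vec (n : nat) := 'I_n -> R.
Definition vadd n (x y : vec n) : vec n := fun i => x i + y i.
Definition vsub n (x y : vec n) : vec n := fun i => x i - y i.
Definition vscal n (a : R) (x : vec n) : vec n := fun i => a * x i.
Definition vzero n : vec n := fun _ => 0.
Definition pairing n (g x : vec n) : R := \big[Rplus/0]_(i < n) (g i * x i).

Definition is_norm n (nrm : vec n -> R) : Prop :=
  (forall x, nrm x = 0 -> x = @vzero n) /\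
  (forall a x, nrm (vscal a x) = Rabs a * nrm x) /\
  (forall x y, nrm (vadd x y) <= nrm x + nrm y).

Definition is_dual_max n (nrm : vec n -> R) (g : vec n) (r : R) : Prop :=
  (exists s, nrm s <= 1 /\ pairing g s = r) /\
  (forall x, nrm x <= 1 -> pairing g x <= r).

Definition dual_norm n (nrm : vec n -> R) (g : vec n) : R :=
  epsilon (inhabits 0) (fun r => is_dual_max nrm g r).

Definition is_sharp_map n (nrm : vec n -> R) (sharp : vec n -> vec n) : Prop :=
  forall g, nrm (sharp g) <= 1 /\ pairing g (sharp g) = dual_norm nrm g.

Definition has_gradient n (nrm : vec n -> R) (f : vec n -> R) (gr : vec n -> vec n) : Prop :=
  forall x eps, 0 < eps -> exists delta, 0 < delta /\
    forall h, nrm h < delta ->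
      Rabs (f (vadd x h) - f x - pairing (gr x) h) <= eps * nrm h.

Definition grad_continuous n (nrm : vec n -> R) (gr : vec n -> vec n) : Prop :=
  forall x eps, 0 < eps -> exists delta, 0 < delta /\
    forall y, nrm (vsub y x) < delta -> dual_norm nrm (vsub (gr y) (gr x)) < eps.

Definition convex_fun n (f : vec n -> R) : Prop :=
  forall x y t, 0 <= t <= 1 ->
    f (vadd (vscal t x) (vscal (1 - t) y)) <= t * f x + (1 - t) * f y.

Definition prox_function n (nrm : vec n -> R) (d : vec n -> R) (gd : vec n -> vec n) : Prop :=
  has_gradient nrm d gd /\ grad_continuous nrm gd /\ convex_fun d /\
  (forall x y, d y - d x - pairing (gd x) (vsub y x) >= / 2 * (nrm (vsub y x)) ^ 2) /\
  (exists x0, d x0 = 0) /\ (forall x, 0 <= d x).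

Definition bregman n (d : vec n -> R) (gd : vec n -> vec n) (x z : vec n) : R :=
  d x - d z - pairing (gd z) (vsub x z).

Definition L_smooth n (nrm : vec n -> R) (L : R) (f : vec n -> R) (gf : vec n -> vec n) : Prop :=
  0 < L /\ has_gradient nrm f gf /\ grad_continuous nrm gf /\
  (forall x y, dual_norm nrm (vsub (gf x) (gf y)) <= L * nrm (vsub x y)).

Definition weakly_quasi_convex n (gamma : R) (f : vec n -> R) (gf : vec n -> vec n)
  (xs : vec n) : Prop :=
  0 < gamma <= 1 /\ (forall x, f xs <= f x) /\
  (forall x, gamma * (f x - f xs) <= pairing (gf x) (vsub x xs)).

Inductive agm_option := OptionA | OptionB.

(* The sequences x, v, y, A, a, beta, h, psi form a run of AGMsDR (with the given
   option) from x0 for N steps: steps 1 for k = 0..N (so that y^N exists), steps 2-3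
   for k = 0..N-1, with grad f(y^k) <> 0 for k < N. *)
Definition AGMsDR_run n (nrm : vec n -> R) (sharp : vec n -> vec n)
  (d : vec n -> R) (gd : vec n -> vec n) (f : vec n -> R) (gf : vec n -> vec n)
  (L : R) (opt : agm_option) (x0 : vec n) (N : nat)
  (x v y : nat -> vec n) (A a beta h : nat -> R) (psi : nat -> vec n -> R) : Prop :=
  A 0%N = 0 /\ v 0%N = x0 /\ x 0%N = x0 /\ (forall z, psi 0%N z = bregman d gd z x0) /\
  (forall k, (k <= N)%N ->
     0 <= beta k <= 1 /\
     (forall b, 0 <= b <= 1 ->
        f (vadd (v k) (vscal (beta k) (vsub (x k) (v k))))
        <= f (vadd (v k) (vscal b (vsub (x k) (v k))))) /\
     y k = vadd (v k) (vscal (beta k) (vsub (x k) (v k)))) /\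
  (forall k, (k < N)%N ->
     gf (y k) <> @vzero n /\
     (match opt with
      | OptionA =>
          (forall z, f (y k) + pairing (gf (y k)) (vsub (x k.+1) (y k))
                       + L / 2 * (nrm (vsub (x k.+1) (y k))) ^ 2
                     <= f (y k) + pairing (gf (y k)) (vsub z (y k))
                       + L / 2 * (nrm (vsub z (y k))) ^ 2) /\
          0 < a k.+1 /\ (a k.+1) ^ 2 / (A k + a k.+1) = / L
      | OptionB =>
          0 <= h k.+1 /\
          (forall t, 0 <= t ->
             f (vsub (y k) (vscal (h k.+1) (sharp (gf (y k)))))
             <= f (vsub (y k) (vscal t (sharp (gf (y k)))))) /\
          x k.+1 = vsub (y k) (vscal (h k.+1) (sharp (gf (y k)))) /\
          A k + a k.+1 <> 0 /\
          f (y k) - (a k.+1) ^ 2 / (2 * (A k + a k.+1)) * (dual_norm nrm (gf (y k))) ^ 2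
            = f (x k.+1) /\
          (forall b, A k + b <> 0 ->
             f (y k) - b ^ 2 / (2 * (A k + b)) * (dual_norm nrm (gf (y k))) ^ 2
               = f (x k.+1) -> b <= a k.+1)
      end) /\
     A k.+1 = A k + a k.+1 /\
     (forall z, psi k.+1 z = psi k z + a k.+1 * (f (y k) + pairing (gf (y k)) (vsub z (y k)))) /\
     (forall z, psi k.+1 (v k.+1) <= psi k.+1 z)).

(* Main.v *)
Require Import Defs.
From Stdlib Require Import Reals.
From mathcomp Require Import ssreflect ssrfun ssrbool ssrnat.
From Stdlib Require Lra Psatz ClassicalEpsilon FunctionalExtensionality.
From HB Require structures.
From mathcomp Require eqtype fintype bigop zify.
From mathcomp Require all_boot all_order all_algebra.
From mathcomp Require all_classical all_reals all_analysis.
From mathcomp Require Rstruct Rstruct_topology.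
Module P1.

From Stdlib Require Import Reals Lra Psatz ClassicalEpsilon FunctionalExtensionality.
From mathcomp Require Import ssreflect ssrfun ssrbool eqtype ssrnat fintype bigop.
From mathcomp Require Import Rstruct.
Set Implicit Arguments. Unset Strict Implicit.
Local Open Scope R_scope.

Section P1.
Variable n : nat.
Implicit Types x y z g : vec n.

Lemma vext x y : (forall i, x i = y i) -> x = y.
Proof. move=> H; apply: functional_extensionality => i; exact: H. Qed.

Lemma pairing_addr g x y : pairing g (vadd x y) = pairing g x + pairing g y.
Proof.
rewrite /pairing -big_split /=; apply: eq_bigr => i _; rewrite /vadd; ring.
Qed.

Lemma pairing_scalr g a x : pairing g (vscal a x) = a * pairing g x.
Proof.
rewrite /pairing big_distrr /=; apply: eq_bigr => i _; rewrite /vscal; ring.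
Qed.

Lemma pairing_sym g x : pairing g x = pairing x g.
Proof. rewrite /pairing; apply: eq_bigr => i _; ring. Qed.

Lemma pairing_subr g x y : pairing g (vsub x y) = pairing g x - pairing g y.
Proof.
have -> : vsub x y = vadd x (vscal (-1) y) by apply: vext => i; rewrite /vsub /vadd /vscal; ring.
rewrite pairing_addr pairing_scalr; ring.
Qed.

Lemma pairing_addl g1 g2 x : pairing (vadd g1 g2) x = pairing g1 x + pairing g2 x.
Proof. by rewrite pairing_sym pairing_addr !(pairing_sym x). Qed.

Lemma pairing_scall a g x : pairing (vscal a g) x = a * pairing g x.
Proof. by rewrite pairing_sym pairing_scalr pairing_sym. Qed.

Lemma pairing_subl g1 g2 x : pairing (vsub g1 g2) x = pairing g1 x - pairing g2 x.
Proof. by rewrite pairing_sym pairing_subr !(pairing_sym x). Qed.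

Lemma pairing_zeror g : pairing g ((@vzero n)) = 0.
Proof.
have -> : (@vzero n) = vscal 0 g by apply: vext => i; rewrite /vzero /vscal; ring.
rewrite pairing_scalr; ring.
Qed.

Lemma pairing_self_pos g : g <> (@vzero n) -> 0 < pairing g g.
Proof.
move=> gne.
have [i gi] : exists i, g i <> 0.
  apply: NNPP => H; apply: gne; apply: vext => i; rewrite /vzero.
  apply: NNPP => Hi; apply: H; by exists i.
rewrite /pairing (bigD1 i) //=.
have : 0 <= \big[Rplus/0]_(j < n | j != i) (g j * g j).
  apply: (big_ind (fun r => 0 <= r)); [lra | move=> *; lra | move=> j _; nra].
have : 0 < g i * g i by nra.
move=> h1 h2; apply: Rplus_lt_le_0_compat; [exact: h1 | exact: h2].
Qed.

Variable nrm : vec n -> R.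
Hypothesis Hn : is_norm nrm.

Lemma nrm_scal a x : nrm (vscal a x) = Rabs a * nrm x.
Proof. by case: Hn => _ [H _]. Qed.

Lemma nrm_tri x y : nrm (vadd x y) <= nrm x + nrm y.
Proof. by case: Hn => _ [_ H]. Qed.

Lemma nrm_eq0 x : nrm x = 0 -> x = (@vzero n).
Proof. move=> hx; case: Hn => H _; exact: H. Qed.

Lemma nrm_zero : nrm ((@vzero n)) = 0.
Proof.
have -> : (@vzero n) = vscal 0 ((@vzero n)) by apply: vext => i; rewrite /vzero /vscal; ring.
rewrite nrm_scal Rabs_R0; ring.
Qed.

Lemma nrm_ge0 x : 0 <= nrm x.
Proof.
have := nrm_tri x (vscal (-1) x).
have -> : vadd x (vscal (-1) x) = (@vzero n) by apply: vext => i; rewrite /vzero /vadd /vscal; ring.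
rewrite nrm_zero nrm_scal Rabs_Ropp Rabs_R1; lra.
Qed.

Lemma nrm_subC x y : nrm (vsub x y) = nrm (vsub y x).
Proof.
have -> : vsub x y = vscal (-1) (vsub y x) by apply: vext => i; rewrite /vsub /vscal; ring.
rewrite nrm_scal Rabs_Ropp Rabs_R1; ring.
Qed.

Lemma nrm_sub_tri x y z : nrm (vsub x z) <= nrm (vsub x y) + nrm (vsub y z).
Proof.
have -> : vsub x z = vadd (vsub x y) (vsub y z) by apply: vext => i; rewrite /vsub /vadd; ring.
exact: nrm_tri.
Qed.


Lemma nrm_rev x y : Rabs (nrm x - nrm y) <= nrm (vsub x y).
Proof.
have h1 : nrm x <= nrm (vsub x y) + nrm y.
  have {1}-> : x = vadd (vsub x y) y by apply: vext => i; rewrite /vsub /vadd; ring.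
  exact: nrm_tri.
have h2 : nrm y <= nrm (vsub y x) + nrm x.
  have {1}-> : y = vadd (vsub y x) x by apply: vext => i; rewrite /vsub /vadd; ring.
  exact: nrm_tri.
rewrite (nrm_subC y x) in h2; apply: Rabs_le; lra.
Qed.

Definition ev (i : 'I_n) : vec n := fun j => if j == i then 1 else 0.

Lemma big_Rle (F G : 'I_n -> R) : (forall i, F i <= G i) ->
  \big[Rplus/0]_(i < n) F i <= \big[Rplus/0]_(i < n) G i.
Proof.
move=> H; apply: (big_ind2 (fun a b => a <= b)); [lra | move=> *; lra | move=> i _; exact: H].
Qed.

Lemma big_Rabs (F : 'I_n -> R) :
  Rabs (\big[Rplus/0]_(i < n) F i) <= \big[Rplus/0]_(i < n) Rabs (F i).
Proof.
apply: (big_ind2 (fun a b => Rabs a <= b)).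
- rewrite Rabs_R0; lra.
- move=> a1 b1 a2 b2 h1 h2; have := Rabs_triang a1 a2; lra.
- move=> i _; lra.
Qed.

Lemma pairing_bound g x M : (forall i, Rabs (x i) <= M) ->
  Rabs (pairing g x) <= M * \big[Rplus/0]_(i < n) Rabs (g i).
Proof.
move=> H; apply: Rle_trans (big_Rabs _) _; rewrite big_distrr /=.
apply: big_Rle => i; rewrite Rabs_mult.
have := Rabs_pos (g i); have := H i; nra.
Qed.

Lemma vdecomp x : x = \big[@vadd n/@vzero n]_(i < n) vscal (x i) (ev i).
Proof.
apply: vext => j.
rewrite (big_morph (fun u : vec n => u j) (id1 := 0) (op1 := Rplus)) //.
rewrite (bigD1 j) //= /vscal /ev eqxx big1 /=; first ring.
move=> i ij; rewrite eq_sym (negbTE ij); ring.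
Qed.

Lemma nrm_decomp x : nrm x <= \big[Rplus/0]_(i < n) (Rabs (x i) * nrm (ev i)).
Proof.
rewrite {1}(vdecomp x).
apply: (big_ind2 (fun u r => nrm u <= r)).
- rewrite nrm_zero; lra.
- move=> u1 r1 u2 r2 h1 h2; have := nrm_tri u1 u2; lra.
- move=> i _; rewrite nrm_scal; lra.
Qed.

Lemma nrm_bound x M : (forall i, Rabs (x i) <= M) ->
  nrm x <= M * \big[Rplus/0]_(i < n) nrm (ev i).
Proof.
move=> H; apply: Rle_trans (nrm_decomp x) _; rewrite big_distrr /=.
apply: big_Rle => i; have := nrm_ge0 (ev i); have := H i; nra.
Qed.

End P1.

End P1.

Module P2.
Import P1.
Unset Implicit Arguments.
From Stdlib Require Import Reals Lra.
From HB Require Import structures.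
From mathcomp Require Import all_boot all_order all_algebra.
From mathcomp Require Import all_classical all_reals all_analysis.
From mathcomp Require Import Rstruct Rstruct_topology.
Import Order.TTheory GRing.Theory Num.Theory.
Import numFieldNormedType.Exports. Import Num.Def.

Local Open Scope classical_set_scope.
Local Open Scope ring_scope.

Section P2.
Variable n : nat.

Definition tof (v : 'rV[R]_n) : vec n := fun i => v ord0 i.
Definition ofv (x : vec n) : 'rV[R]_n := \row_i x i.

Lemma tof_ofv x : tof (ofv x) = x.
Proof. by apply: vext => i; rewrite /tof /ofv mxE. Qed.

Lemma tofB v w : tof (v - w) = vsub (tof v) (tof w).
Proof. by apply: vext => i; rewrite /tof /vsub !mxE. Qed.

Lemma coord_le_norm (v : 'rV[R]_n) i : `|v ord0 i| <= `|v|.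
Proof.
have /mapP[j Hj ->] : `|v ord0 i| \in [seq `|v x.1 x.2| | x : 'I_1 * 'I_n].
  by apply/mapP; exists (ord0, i) => //=; rewrite mem_enum.
by rewrite [leRHS]/normr /= mx_normrE; apply/bigmax_geP; right => /=; exists j.
Qed.

Lemma lip_continuous (F : 'rV[R]_n -> R) (C : R) : 0 <= C ->
  (forall v w, `|F v - F w| <= C * `|v - w|) -> continuous F.
Proof.
move=> C0 H v; rewrite /continuous_at; apply: (proj2 (@cvgrPdist_lt R R^o _ (nbhs v) (nbhs_filter v) F (F v))) => e e0.
have e1 : 0 < e / (C + 1) by rewrite divr_gt0 // ltr_wpDl.
near=> w.
apply: (le_lt_trans (H v w)).
have hw : `|v - w| < e / (C + 1) by near: w; exact: (@cvgr_dist_lt R _ _ (nbhs v) (nbhs_filter v) id v cvg_id _ e1).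
have key : C * (e / (C + 1)) < e.
  by rewrite mulrCA gtr_pMr // ltr_pdivrMr ?mul1r ?ltrDl // ltr_wpDl.
exact: (le_lt_trans (ler_wpM2l C0 (ltW hw)) key).
Unshelve. all: by end_near.
Qed.

End P2.
Arguments tof {n}.
Arguments ofv {n}.
Arguments lip_continuous {n}.
Arguments coord_le_norm {n}.
Arguments tof_ofv {n}.
Arguments tofB {n}.

Section P2b.
Variable n : nat.
Variable nrm : vec n -> R.
Hypothesis Hn : is_norm nrm.

Lemma test (x : R) : `|x| = Rabs x.
Proof. reflexivity. Qed.

Lemma tofZ a (v : 'rV[R]_n) : tof (a *: v) = vscal a (tof v).
Proof. by apply: vext => i; rewrite /tof /vscal !mxE. Qed.

Lemma tof0 : tof (0 : 'rV[R]_n) = @vzero n.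
Proof. by apply: vext => i; rewrite /tof /vzero !mxE. Qed.

Let C := \big[Rplus/0%R]_(i < n) nrm (@ev n i).

Lemma C_ge0 : 0 <= C.
Proof.
apply/RleP; rewrite /C; apply: (big_ind (fun r => Rle 0 r)); [exact: Rle_refl | |].
- by move=> a b ha hb; apply: Rplus_le_le_0_compat.
- by move=> i _; apply: nrm_ge0.
Qed.

Lemma nrm_lip (v w : 'rV[R]_n) : `|nrm (tof v) - nrm (tof w)| <= C * `|v - w|.
Proof.
apply/RleP; apply: (Rle_trans _ (nrm (vsub (tof v) (tof w)))); first by have hh := nrm_rev Hn (tof v) (tof w); exact hh.
rewrite -tofB mulrC; apply: nrm_bound => // i.
by apply/RleP; apply: coord_le_norm.
Qed.

Lemma nrm_cont : continuous (fun v : 'rV[R]_n => nrm (tof v)).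
Proof. exact: (lip_continuous _ _ C_ge0 nrm_lip). Qed.

Lemma pairing_cont (g : vec n) : continuous (fun v : 'rV[R]_n => pairing g (tof v)).
Proof.
have C0 : 0 <= \big[Rplus/0%R]_(i < n) Rabs (g i).
  apply/RleP; apply: (big_ind (fun r => Rle 0 r)); [exact: Rle_refl | |].
  - by move=> a b ha hb; apply: Rplus_le_le_0_compat.
  - by move=> i _; apply: Rabs_pos.
apply: (lip_continuous _ _ C0) => v w.
have -> : pairing g (tof v) - pairing g (tof w) = pairing g (tof (v - w)).
  by rewrite tofB pairing_subr.
rewrite mulrC; apply/RleP; apply: pairing_bound => i.
by apply/RleP; apply: coord_le_norm.
Qed.

End P2b.

Lemma bnd_set n (A : set 'rV[R]_n) (M : R) : (forall v, A v -> `|v| <= M) -> bounded_set A.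
Proof.
move=> H; exists M; split; first exact: num_real.
move=> M' MM' v Av /=; exact: le_trans (H v Av) (ltW MM').
Qed.

Section P2c.
Variable n : nat.
Variable nrm : vec n -> R.
Hypothesis Hn : is_norm nrm.
Let F := fun v : 'rV[R]_n => nrm (tof v).

Lemma F_lower : (0 < n)%N -> exists mu, 0 < mu /\ forall v, mu * `|v| <= F v.
Proof.
move=> n0.
pose S := [set v : 'rV[R]_n | `|v| = 1]%classic.
have S0 : S !=set0.
  pose i0 : 'I_n := Ordinal n0.
  pose v1 : 'rV[R]_n := const_mx 1.
  have v1ne : v1 != 0.
    apply/eqP => /(congr1 (fun M : 'rV[R]_n => M ord0 i0)); rewrite !mxE => /eqP; by rewrite oner_eq0.
  by exists (`|v1|^-1 *: v1); rewrite /S /= normfZV.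
have cS : compact S.
  apply: bounded_closed_compact.
    by apply: (@bnd_set _ _ 1) => v ->.
  have -> : S = (fun v : 'rV[R]_n => `|v|) @^-1` [set 1] by [].
  apply: preimage_closed; last exact: closed_eq.
  by move=> v _; apply: norm_continuous.
have [c cinS cmin] := EVT_min_rV S0 cS (continuous_subspaceT (nrm_cont _ _ Hn)).
move: cinS; rewrite in_setE /S /= => c1.
have Fge0 : forall v, 0 <= F v by move=> v; apply/RleP; apply: nrm_ge0.
exists (F c); split.
  rewrite lt_neqAle Fge0 andbT; apply/eqP => /esym Fc0.
  have : tof c = @vzero n by apply: (nrm_eq0 Hn).
  move=> tc; have c0 : c = 0.
    apply/matrixP => i j; rewrite (ord1 i) mxE.
    by have := congr1 (fun u => u j) tc; rewrite /tof /vzero.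
  by move: c1; rewrite c0 normr0 => /eqP; rewrite eq_sym oner_eq0.
move=> v; have [->|vne] := eqVneq v 0; first by rewrite normr0 mulr0 Fge0.
have : F c <= F (`|v|^-1 *: v) by apply: cmin; rewrite in_setE /S /= normfZV.
rewrite /F tofZ nrm_scal //.
have -> : Rabs (`|v|^-1) = `|v|^-1 by rewrite -test ger0_norm // invr_ge0.
have vpos : 0 < `|v| by rewrite normr_gt0.
by rewrite -ler_pdivlMr // mulrC.
Qed.

End P2c.

Lemma dual_max_exists n (nrm : vec n -> R) : is_norm nrm ->
  forall g, exists r, is_dual_max nrm g r.
Proof.
move=> Hn g.
have [n0|] := eqVneq n 0%N.
  subst n; exists 0; split.
    exists (@vzero 0); split; first by apply/RleP; rewrite nrm_zero // ler01.
    by rewrite /pairing big_ord0.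
  by move=> x _; rewrite /pairing big_ord0; apply: Rle_refl.
rewrite -lt0n => n0.
have [mu [mu0 Fmu]] := F_lower _ _ Hn n0.
pose B := [set v : 'rV[R]_n | nrm (tof v) <= 1]%classic.
have B0 : B !=set0 by exists 0; rewrite /B /= tof0 nrm_zero // ler01.
have cB : compact B.
  apply: bounded_closed_compact.
    apply: (@bnd_set _ _ mu^-1) => v Bv.
    rewrite -(ler_pM2l mu0) mulfV ?gt_eqF //; exact: le_trans (Fmu v) Bv.
  have -> : B = (fun v : 'rV[R]_n => nrm (tof v)) @^-1` [set x | x <= 1] by [].
  apply: preimage_closed; last exact: closed_le.
  by move=> v _; apply: (nrm_cont _ _ Hn).
have [c cinB cmax] := EVT_max_rV B0 cB (continuous_subspaceT (pairing_cont _ g)).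
move: cinB; rewrite in_setE /B /= => c1.
exists (pairing g (tof c)); split.
  by exists (tof c); split => //; apply/RleP.
move=> x x1; apply/RleP.
have := cmax (ofv x); rewrite tof_ofv; apply.
by rewrite in_setE /B /= tof_ofv; apply/RleP.
Qed.

End P2.

Module P3.
Import P1 P2.
From Stdlib Require Import Reals Lra Psatz ClassicalEpsilon FunctionalExtensionality.
From mathcomp Require Import ssreflect ssrfun ssrbool eqtype ssrnat fintype bigop.
Set Implicit Arguments. Unset Strict Implicit.
Local Open Scope R_scope.

Section P3.
Variable n : nat.
Variable nrm : vec n -> R.
Hypothesis Hn : is_norm nrm.
Implicit Types x y z g h : vec n.

Lemma dual_spec g : is_dual_max nrm g (dual_norm nrm g).
Proof.
rewrite /dual_norm; apply: epsilon_spec; exact: dual_max_exists.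
Qed.

Lemma dual_le g x : pairing g x <= dual_norm nrm g * nrm x.
Proof.
have [_ H] := dual_spec g.
have [x0|xne] := Req_dec (nrm x) 0.
  have := pairing_zeror g; rewrite -(nrm_eq0 Hn x0) x0; lra.
have xp : 0 < nrm x by have := nrm_ge0 Hn x; lra.
have := H (vscal (/ nrm x) x).
rewrite nrm_scal // pairing_scalr Rabs_right; last by apply: Rle_ge; apply: Rlt_le; apply: Rinv_0_lt_compat.
rewrite Rinv_l //.
move=> /(_ (Rle_refl 1)) h1.
have : pairing g x = nrm x * (/ nrm x * pairing g x) by field.
move=> ->; rewrite Rmult_comm; apply: Rmult_le_compat_r; lra.
Qed.

Lemma dual_ge0 g : 0 <= dual_norm nrm g.
Proof.
have [_ H] := dual_spec g.
have := H (@vzero n); rewrite nrm_zero // pairing_zeror; apply; lra.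
Qed.

Lemma dual_abs g x : Rabs (pairing g x) <= dual_norm nrm g * nrm x.
Proof.
apply: Rabs_le; split; last exact: dual_le.
have := dual_le g (vscal (-1) x); rewrite pairing_scalr nrm_scal // Rabs_Ropp Rabs_R1; lra.
Qed.

Lemma dual_pos g : g <> @vzero n -> 0 < dual_norm nrm g.
Proof.
move=> gne; have h1 := pairing_self_pos gne; have h2 := dual_le g g.
have h3 := dual_ge0 g; have h4 := nrm_ge0 Hn g.
destruct (Req_dec (dual_norm nrm g) 0) as [e|e]; last lra.
rewrite e in h2; lra.
Qed.

Variable f : vec n -> R.
Variable gf : vec n -> vec n.

Lemma vadd_scal_split y h t s :
  vadd y (vscal (t + s) h) = vadd (vadd y (vscal t h)) (vscal s h).
Proof. apply: vext => i; rewrite /vadd /vscal; ring. Qed.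

Lemma line_deriv : has_gradient nrm f gf -> forall y h t,
  derivable_pt_lim (fun s => f (vadd y (vscal s h))) t (pairing (gf (vadd y (vscal t h))) h).
Proof.
move=> Hg y h t eps eps0.
have [h0|hne] := Req_dec (nrm h) 0.
  have hz := nrm_eq0 Hn h0.
  exists (mkposreal 1 Rlt_0_1) => s _ _ /=.
  have e : forall u, vadd y (vscal u h) = y.
    by move=> u; apply: vext => i; rewrite hz /vadd /vscal /vzero; ring.
  rewrite !e hz pairing_zeror.
  have -> : (f y - f y) / s - 0 = 0 by rewrite /Rdiv; ring.
  by rewrite Rabs_R0.
have hp : 0 < nrm h by have := nrm_ge0 Hn h; lra.
have e2 : 0 < eps / 2 / nrm h by apply: Rdiv_lt_0_compat; lra.
have [del [del0 Hd]] := Hg (vadd y (vscal t h)) _ e2.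
have dp : 0 < del / nrm h by apply: Rdiv_lt_0_compat.
exists (mkposreal _ dp) => s sne /= sd.
rewrite vadd_scal_split.
have hs : nrm (vscal s h) < del.
  rewrite nrm_scal //.
  have : Rabs s * nrm h < del / nrm h * nrm h by apply: Rmult_lt_compat_r.
  by rewrite /Rdiv Rmult_assoc Rinv_l ?Rmult_1_r; lra.
have := Hd _ hs; rewrite pairing_scalr nrm_scal //.
set P := pairing _ h; set F1 := f (vadd _ (vscal s h)); set F0 := f _.
move=> H1.
have -> : (F1 - F0) / s - P = (F1 - F0 - s * P) / s by field.
rewrite {1}/Rdiv Rabs_mult Rabs_inv.
have sp : 0 < Rabs s by apply: Rabs_pos_lt.
apply: (Rle_lt_trans _ (eps / 2)); last lra.
apply: (Rmult_le_reg_r (Rabs s)) => //.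
rewrite Rmult_assoc Rinv_l; last lra.
rewrite Rmult_1_r.
have -> : eps / 2 * Rabs s = eps / 2 / nrm h * (Rabs s * nrm h) by field; lra.
exact: H1.
Qed.


Lemma dpl_eq (F : R -> R) t l l' : derivable_pt_lim F t l -> l = l' -> derivable_pt_lim F t l'.
Proof. by move=> H <-. Qed.

Lemma quad_deriv c1 c2 t :
  derivable_pt_lim (fun s => s * c1 + c2 * (s * s)) t (c1 + 2 * c2 * t).
Proof.
have d1 : derivable_pt_lim (fun s => s * c1) t c1.
  apply: (derivable_pt_lim_ext (mult_real_fct c1 id)); first by move=> z; rewrite /mult_real_fct /id; ring.
  apply: dpl_eq; first exact: derivable_pt_lim_scal (derivable_pt_lim_id t).
  ring.
have d2 : derivable_pt_lim (fun s => c2 * (s * s)) t (2 * c2 * t).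
  apply: (derivable_pt_lim_ext (mult_real_fct c2 (fun u : R => u ^ 2))); first by move=> z; rewrite /mult_real_fct; ring.
  apply: dpl_eq; first exact: derivable_pt_lim_scal (derivable_pt_lim_pow t 2).
  simpl; ring.
apply: (derivable_pt_lim_ext (plus_fct (fun s => s * c1) (fun s => c2 * (s * s)))); first by move=> z.
exact: derivable_pt_lim_plus d1 d2.
Qed.

Lemma descent L : L_smooth nrm L f gf -> forall y h,
  f (vadd y h) <= f y + pairing (gf y) h + L / 2 * nrm h ^ 2.
Proof.
move=> [L0 [Hg [_ Hl]]] y h.
set c1 := pairing (gf y) h; set q := nrm h ^ 2.
pose phi := fun t => f (vadd y (vscal t h)) - (t * c1 + (L / 2 * q) * (t * t)).
pose phi' := fun t => pairing (gf (vadd y (vscal t h))) h - (c1 + 2 * (L / 2 * q) * t).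
have dphi : forall t, 0 <= t <= 1 -> derivable_pt_lim phi t (phi' t).
  move=> t _; apply: (derivable_pt_lim_minus (fun s => f (vadd y (vscal s h)))
     (fun s => s * c1 + (L / 2 * q) * (s * s))).
  - exact: line_deriv.
  - exact: quad_deriv.
have [c [Hc [c0 c1']]] := MVT_cor2 phi phi' 0 1 Rlt_0_1 dphi.
have hle : phi' c <= 0.
  rewrite /phi'.
  have -> : pairing (gf (vadd y (vscal c h))) h =
            c1 + pairing (vsub (gf (vadd y (vscal c h))) (gf y)) h by rewrite pairing_subl /c1; ring.
  have h1 := dual_le (vsub (gf (vadd y (vscal c h))) (gf y)) h.
  have h2 := Hl (vadd y (vscal c h)) y.
  have ev' : vsub (vadd y (vscal c h)) y = vscal c h.
    by apply: vext => i; rewrite /vsub /vadd /vscal; ring.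
  rewrite ev' nrm_scal // Rabs_right in h2; last lra.
  have h3 := nrm_ge0 Hn h.
  have : dual_norm nrm (vsub (gf (vadd y (vscal c h))) (gf y)) * nrm h <= L * (c * nrm h) * nrm h.
    by apply: Rmult_le_compat_r.
  rewrite /q; simpl; nra.
have e1 : vadd y (vscal 1 h) = vadd y h by apply: vext => i; rewrite /vadd /vscal; ring.
have e0 : vadd y (vscal 0 h) = y by apply: vext => i; rewrite /vadd /vscal; ring.
move: Hc; rewrite /phi e1 e0; nra.
Qed.

Lemma ls_opt : has_gradient nrm f gf -> forall v x b0,
  0 < b0 <= 1 ->
  (forall b, 0 <= b <= 1 -> f (vadd v (vscal b0 (vsub x v))) <= f (vadd v (vscal b (vsub x v)))) ->
  pairing (gf (vadd v (vscal b0 (vsub x v)))) (vsub x v) <= 0.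
Proof.
move=> Hg v x b0 hb Hmin.
apply: Rnot_lt_le => Dpos.
set D := pairing _ _ in Dpos.
have Hd := line_deriv Hg v (vsub x v) b0.
have e2 : 0 < D / 2 by lra.
have [del Hdel] := Hd _ e2.
pose s := - Rmin b0 (del / 2).
have dp := cond_pos del.
have sneg : s < 0 by rewrite /s; have := Rmin_glb_lt b0 (del/2) 0 ltac:(lra) ltac:(lra); lra.
have sge : - b0 <= s by rewrite /s; have := Rmin_l b0 (del/2); lra.
have sabs : Rabs s < del.
  rewrite Rabs_left //; rewrite /s; have := Rmin_r b0 (del/2); lra.
have := Hdel s ltac:(lra) sabs.
have := Hmin (b0 + s) ltac:(lra).
set F1 := f (vadd v (vscal (b0 + s) (vsub x v))).
set F0 := f (vadd v (vscal b0 (vsub x v))).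
move=> hmin habs.
move: habs; rewrite -/D => habs.
have : (F1 - F0) / s - D > - (D / 2) by case: (Rabs_def2 _ _ habs) => ha1 ha2; lra.
have : (F1 - F0) / s <= 0.
  have -> : (F1 - F0) / s = (F0 - F1) * / (- s) by field; lra.
  have : 0 < / - s by apply: Rinv_0_lt_compat; lra.
  nra.
lra.
Qed.

End P3.

End P3.

Module P4.
Import P1 P2 P3.
From Stdlib Require Import Reals Lra Psatz ClassicalEpsilon FunctionalExtensionality.
From mathcomp Require Import ssreflect ssrfun ssrbool eqtype ssrnat fintype bigop.
From mathcomp Require Import zify.
Set Implicit Arguments. Unset Strict Implicit.
Local Open Scope R_scope.

Section P4.
Variables (n : nat) (nrm : vec n -> R) (sharp : vec n -> vec n)
  (d : vec n -> R) (gd : vec n -> vec n) (f : vec n -> R) (gf : vec n -> vec n)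
  (L : R) (xs : vec n) (opt : agm_option) (x0 : vec n) (N : nat)
  (x v y : nat -> vec n) (A a beta h : nat -> R) (psi : nat -> vec n -> R).
Hypothesis Hn : is_norm nrm.
Hypothesis Hs : is_sharp_map nrm sharp.
Hypothesis Hd : prox_function nrm d gd.
Hypothesis HL : L_smooth nrm L f gf.
Hypothesis Hq : weakly_quasi_convex 1 f gf xs.
Hypothesis Hrun : AGMsDR_run nrm sharp d gd f gf L opt x0 N x v y A a beta h psi.

Local Notation D := (dual_norm nrm).
Local Notation G k := (dual_norm nrm (gf (y k))).

Lemma L0 : 0 < L. Proof. by case: HL. Qed.
Lemma Hgrad : has_gradient nrm f gf. Proof. by case: HL => _ []. Qed.

Lemma sharp_step z : f (vsub z (vscal (D (gf z) / L) (sharp (gf z)))) <= f z - (D (gf z)) ^ 2 / (2 * L).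
Proof.
have L0 := L0.
set g := gf z; set t := D g / L; set s := sharp g.
have [s1 ps] := Hs g.
rewrite -/s in s1 ps.
have t0 : 0 <= t by have := dual_ge0 Hn g; have := Rinv_0_lt_compat _ L0; rewrite /t /Rdiv; nra.
have := descent Hn HL z (vscal (- t) s).
have -> : vadd z (vscal (- t) s) = vsub z (vscal t s).
  by apply: vext => i; rewrite /vadd /vsub /vscal; ring.
rewrite pairing_scalr -/g -/s ps nrm_scal // Rabs_Ropp Rabs_right; last lra.
have hs0 := nrm_ge0 Hn s.
have q0 : 0 <= t * nrm s by nra.
have q1 : t * nrm s <= t by nra.
have : (t * nrm s) ^ 2 <= t ^ 2 by simpl; nra.
have e : - t * D g + L / 2 * t ^ 2 = - (D g) ^ 2 / (2 * L) by rewrite /t; field; lra.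
move=> h1 h2.
have : L / 2 * (t * nrm s) ^ 2 <= L / 2 * t ^ 2 by apply: Rmult_le_compat_l; lra.
lra.
Qed.

Lemma step1_facts k : (k <= N)%N ->
  f (y k) <= f (x k) /\ 0 <= pairing (gf (y k)) (vsub (v k) (y k)).
Proof.
move=> hk.
case: Hrun => _ [_ [_ [_ [H1 _]]]].
have [[b0 b1] [Hmin Hy]] := H1 k hk.
split.
  have := Hmin 1 ltac:(lra).
  have -> : vadd (v k) (vscal 1 (vsub (x k) (v k))) = x k.
    by apply: vext => i; rewrite /vadd /vscal /vsub; ring.
  by rewrite Hy.
have -> : vsub (v k) (y k) = vscal (- beta k) (vsub (x k) (v k)).
  by rewrite Hy; apply: vext => i; rewrite /vadd /vscal /vsub; ring.
rewrite pairing_scalr.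
have [bz|bp] : beta k = 0 \/ 0 < beta k by lra.
  rewrite bz; lra.
have := ls_opt Hn Hgrad (conj bp b1) Hmin.
rewrite -Hy; nra.
Qed.


Lemma model_val z :
  pairing (gf z) (vsub (vsub z (vscal (D (gf z) / L) (sharp (gf z)))) z)
  + L / 2 * nrm (vsub (vsub z (vscal (D (gf z) / L) (sharp (gf z)))) z) ^ 2 <= - (D (gf z)) ^ 2 / (2 * L).
Proof.
set g := gf z.
set zz := vsub z (vscal (D g / L) (sharp g)).
have L0 := L0.
set t := D g / L; set s := sharp g.
have [s1 ps] := Hs g.
rewrite -/s in s1 ps.
have t0 : 0 <= t by have := dual_ge0 Hn g; have := Rinv_0_lt_compat _ L0; rewrite /t /Rdiv; nra.
have -> : vsub zz z = vscal (- t) s.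
  by apply: vext => i; rewrite /zz /t /s /vsub /vscal; ring.
rewrite pairing_scalr ps nrm_scal // Rabs_Ropp Rabs_right; last lra.
have hs0 := nrm_ge0 Hn s.
have q0 : 0 <= t * nrm s by nra.
have q1 : t * nrm s <= t by nra.
have : (t * nrm s) ^ 2 <= t ^ 2 by simpl; nra.
have e : - t * D g + L / 2 * t ^ 2 = - (D g) ^ 2 / (2 * L) by rewrite /t; field; lra.
move=> h2.
have : L / 2 * (t * nrm s) ^ 2 <= L / 2 * t ^ 2 by apply: Rmult_le_compat_l; lra.
lra.
Qed.

Lemma step2_facts k : (k < N)%N -> 0 <= A k ->
  0 < a k.+1 /\ A k.+1 = A k + a k.+1 /\ A k.+1 <= L * (a k.+1) ^ 2 /\
  (a k.+1) ^ 2 / 2 * (G k) ^ 2 <= A k.+1 * (f (y k) - f (x k.+1)) /\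
  f (x k.+1) <= f (y k) - (G k) ^ 2 / (2 * L).
Proof.
move=> hk Ak0.
have L0 := L0.
case: Hrun => _ [_ [_ [_ [_ H2]]]].
have [gne [Hopt [HA _]]] := H2 k hk.
have Gpos := dual_pos Hn gne.
have ss := sharp_step (y k).
have mv := model_val (y k).
set g := gf (y k) in gne Gpos ss mv Hopt *.
set t := D g / L in ss mv.
set zz := vsub (y k) (vscal t (sharp g)) in ss mv.
have G2 : 0 < (D g) ^ 2 by simpl; nra.
rewrite HA.
case: opt Hopt => [[Hmin [apos Heq]] | [h0 [Hminh [Hx [Hne [Heq Hmax]]]]]].
- have K5 : f (x k.+1) <= f (y k) - (D g) ^ 2 / (2 * L).
    have := descent Hn HL (y k) (vsub (x k.+1) (y k)).
    have -> : vadd (y k) (vsub (x k.+1) (y k)) = x k.+1.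
      by apply: vext => i; rewrite /vadd /vsub; ring.
    have := Hmin zz; rewrite -/g; lra.
  have Apos : 0 < A k + a k.+1 by lra.
  have K3 : A k + a k.+1 = L * a k.+1 ^ 2.
    have e2 : a k.+1 ^ 2 = / L * (A k + a k.+1) by rewrite -Heq; field; lra.
    rewrite e2; field; lra.
  split; first exact: apos.
  split; first done.
  split; first lra.
  split; last exact: K5.
  rewrite K3.
  have : L * a k.+1 ^ 2 * ((D g) ^ 2 / (2 * L)) <= L * a k.+1 ^ 2 * (f (y k) - f (x k.+1)).
    apply: Rmult_le_compat_l; [simpl; nra | lra].
  have -> : L * a k.+1 ^ 2 * (D g ^ 2 / (2 * L)) = a k.+1 ^ 2 / 2 * D g ^ 2 by field; lra.
  done.
- have K5 : f (x k.+1) <= f (y k) - (D g) ^ 2 / (2 * L).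
    rewrite Hx; apply: Rle_trans (Hminh t _) ss.
    have := dual_ge0 Hn g; have := Rinv_0_lt_compat _ L0; rewrite /t /Rdiv; nra.
  set c := 2 * (f (y k) - f (x k.+1)) / (D g) ^ 2.
  have c1 : / L <= c.
    rewrite /c; apply: (Rmult_le_reg_r ((D g)^2)) => //.
    have -> : 2 * (f (y k) - f (x k.+1)) / D g ^ 2 * D g ^ 2 = 2 * (f (y k) - f (x k.+1)) by field; lra.
    have : / L * D g ^ 2 = 2 * (D g ^ 2 / (2 * L)) by field; lra.
    lra.
  have cpos : 0 < c by have := Rinv_0_lt_compat _ L0; lra.
  have eq1 : a k.+1 ^ 2 / (A k + a k.+1) = c.
    rewrite /c -Heq; field; repeat split; by [exact: Hne | lra].
  have Apos : 0 < A k + a k.+1.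
    have [hh|hh] : A k + a k.+1 < 0 \/ 0 < A k + a k.+1 by lra.
      exfalso; move: eq1; rewrite /Rdiv.
      have : / (A k + a k.+1) < 0 by apply: Rinv_lt_0_compat.
      have : 0 <= a k.+1 ^ 2 by simpl; nra.
      nra.
    done.
  have K3 : A k + a k.+1 <= L * a k.+1 ^ 2.
    have e2 : a k.+1 ^ 2 = c * (A k + a k.+1) by rewrite -eq1; field; lra.
    rewrite e2.
    have : / L * (A k + a k.+1) <= c * (A k + a k.+1) by apply: Rmult_le_compat_r; lra.
    have : L * (/ L * (A k + a k.+1)) = A k + a k.+1 by field; lra.
    move=> e3 h3.
    have : L * (/ L * (A k + a k.+1)) <= L * (c * (A k + a k.+1)) by apply: Rmult_le_compat_l; lra.
    lra.
  have K1 : 0 < a k.+1.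
    set S := sqrt (c ^ 2 + 4 * c * A k).
    have Sq : S * S = c ^ 2 + 4 * c * A k by apply: sqrt_sqrt; simpl; nra.
    have S0 : 0 <= S by apply: sqrt_pos.
    set bs := (c + S) / 2.
    have bsq : bs ^ 2 = c * bs + c * A k by rewrite /bs; simpl; nra.
    have bpos : 0 < A k + bs by rewrite /bs; lra.
    have : bs <= a k.+1.
      apply: Hmax; first lra.
      have -> : bs ^ 2 / (2 * (A k + bs)) = c / 2.
        rewrite bsq; field; lra.
      rewrite /c; field; lra.
    rewrite /bs; lra.
  split; first exact: K1.
  split; first done.
  split; first lra.
  split; last exact: K5.
  have : (A k + a k.+1) * (f (y k) - f (x k.+1)) = a k.+1 ^ 2 / 2 * D g ^ 2 by rewrite -Heq; field; exact: Hne.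
  lra.
Qed.


Lemma A_nonneg k : (k <= N)%N -> 0 <= A k.
Proof.
elim: k => [|k IH] hk.
  by case: Hrun => -> _; lra.
have [K1 [K2 _]] := step2_facts hk (IH (ltnW hk)).
have := IH (ltnW hk); lra.
Qed.

Lemma A_lower k : (k <= N)%N -> INR k ^ 2 <= 4 * L * A k.
Proof.
have L0 := L0.
elim: k => [|k IH] hk.
  case: Hrun => -> _; simpl; lra.
have Ak0 := A_nonneg (ltnW hk).
have [K1 [K2 [K3 _]]] := step2_facts hk Ak0.
have IH' := IH (ltnW hk).
rewrite K2 S_INR.
set K := INR k in IH' *.
have K0 : 0 <= K by apply: pos_INR.
set w := 2 * L * a k.+1.
have w0 : 0 < w by rewrite /w; nra.
have hw : 4 * L * A k + 2 * w <= w ^ 2.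
  have : 4 * L * (A k + a k.+1) <= 4 * L * (L * a k.+1 ^ 2) by apply: Rmult_le_compat_l; lra.
  rewrite /w; simpl; nra.
have w2 : 2 <= w by simpl in hw; nra.
have wK : K <= w - 1.
  apply: Rnot_lt_le => hK.
  have h1 : (w - 1) * (w - 1) < K * K by nra.
  have h2 : (w - 1) * (w - 1) = w ^ 2 - 2 * w + 1 by ring.
  have h3 : K ^ 2 = K * K by ring.
  lra.
have h4 : 4 * L * (A k + a k.+1) = 4 * L * A k + 2 * w by rewrite /w; ring.
have h5 : (K + 1) ^ 2 = K ^ 2 + 2 * K + 1 by ring.
lra.
Qed.

Lemma bregman_ge z w : / 2 * nrm (vsub z w) ^ 2 <= bregman d gd z w.
Proof.
case: Hd => _ [_ [_ [H _]]].
by apply: Rge_le; apply: H.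
Qed.

Lemma SC (phi : vec n -> R) c l w :
  (forall z, phi z = d z + c + pairing l z) -> (forall z, phi w <= phi z) ->
  forall z, phi w + / 2 * nrm (vsub z w) ^ 2 <= phi z.
Proof.
move=> Hf Hm z.
case: Hd => _ [_ [_ [Hc _]]].
set r := nrm (vsub z w).
have r0 : 0 <= r by apply: nrm_ge0.
have key : forall t, 0 < t < 1 -> (1 - t) / 2 * r ^ 2 <= phi z - phi w.
  move=> t [t0 t1].
  set u := vadd (vscal t z) (vscal (1 - t) w).
  have ez : vsub z u = vscal (1 - t) (vsub z w).
    by apply: vext => i; rewrite /u /vsub /vadd /vscal; ring.
  have ew : vsub w u = vscal (- t) (vsub z w).
    by apply: vext => i; rewrite /u /vsub /vadd /vscal; ring.
  have E1 := Rge_le _ _ (Hc u z); rewrite ez pairing_scalr nrm_scal // Rabs_right in E1; last lra.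
  have E2 := Rge_le _ _ (Hc u w); rewrite ew pairing_scalr nrm_scal // Rabs_Ropp Rabs_right in E2; last lra.
  have pu : pairing l u = t * pairing l z + (1 - t) * pairing l w.
    by rewrite /u pairing_addr !pairing_scalr.
  have mu := Hm u.
  rewrite !Hf pu in mu *.
  rewrite -/r in E1 E2.
  set P := pairing (gd u) (vsub z w) in E1 E2.
  have h1 : t * (/ 2 * ((1 - t) * r) ^ 2) <= t * (d z - d u - (1 - t) * P) by apply: Rmult_le_compat_l; lra.
  have h2 : (1 - t) * (/ 2 * (t * r) ^ 2) <= (1 - t) * (d w - d u - - t * P) by apply: Rmult_le_compat_l; lra.
  have h3 : t * ((1 - t) / 2 * r ^ 2) <= t * (d z + c + pairing l z - (d w + c + pairing l w)).
    simpl in *; nra.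
  by apply: (Rmult_le_reg_l t).
apply: Rnot_lt_le => hlt.
set Dl := phi z - phi w.
have hD : Dl < / 2 * r ^ 2 by rewrite /Dl; lra.
have Dl0 : 0 <= Dl.
  have hh := key (/2) ltac:(lra); rewrite -/Dl in hh.
  have := pow2_ge_0 r; lra.
have R2 : 0 < r ^ 2 by lra.
set e := / 2 * r ^ 2 - Dl.
have e0 : 0 < e by rewrite /e; lra.
set t := Rmin (/ 2) (e / r ^ 2).
have t0 : 0 < t by apply: Rmin_glb_lt; [lra | apply: Rdiv_lt_0_compat].
have t1 : t <= / 2 by apply: Rmin_l.
have t2 : t <= e / r ^ 2 by apply: Rmin_r.
have := key t ltac:(lra).
have : t * r ^ 2 <= e.
  have := Rmult_le_compat_r (r ^ 2) _ _ (Rlt_le _ _ R2) t2.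
  have -> : e / r ^ 2 * r ^ 2 = e by rewrite /Rdiv Rmult_assoc Rinv_l ?Rmult_1_r; lra.
  done.
rewrite -/Dl /e; lra.
Qed.


Lemma step3 k : (k < N)%N ->
  gf (y k) <> @vzero n /\ A k.+1 = A k + a k.+1 /\
  (forall z, psi k.+1 z = psi k z + a k.+1 * (f (y k) + pairing (gf (y k)) (vsub z (y k)))) /\
  (forall z, psi k.+1 (v k.+1) <= psi k.+1 z).
Proof.
move=> hk; case: Hrun => _ [_ [_ [_ [_ H2]]]].
by have [gne [_ [HA [Hp Hm]]]] := H2 k hk.
Qed.

Lemma psi_form k : (k <= N)%N -> exists c l, forall z, psi k z = d z + c + pairing l z.
Proof.
elim: k => [|k IH] hk.
  case: Hrun => _ [_ [_ [Hp0 _]]].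
  exists (- d x0 + pairing (gd x0) x0), (vscal (-1) (gd x0)) => z.
  rewrite Hp0 /bregman pairing_subr pairing_scall; ring.
have [c [l Hl]] := IH (ltnW hk).
have [_ [_ [Hp _]]] := step3 hk.
exists (c + a k.+1 * f (y k) - a k.+1 * pairing (gf (y k)) (y k)), (vadd l (vscal (a k.+1) (gf (y k)))) => z.
rewrite Hp Hl pairing_addl pairing_scall pairing_subr; ring.
Qed.

Lemma vsub_self z : vsub z z = @vzero n.
Proof. by apply: vext => i; rewrite /vsub /vzero; ring. Qed.

Lemma psi_min k : (k <= N)%N -> forall z, psi k (v k) <= psi k z.
Proof.
case: k => [|k] hk z.
  case: Hrun => _ [Hv0 [_ [Hp0 _]]].
  rewrite !Hp0 Hv0 {1}/bregman vsub_self pairing_zeror.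
  have := bregman_ge z x0; have := pow2_ge_0 (nrm (vsub z x0)); lra.
by have [_ [_ [_ Hm]]] := step3 hk.
Qed.

Lemma psi_sc k : (k <= N)%N -> forall z, psi k (v k) + / 2 * nrm (vsub z (v k)) ^ 2 <= psi k z.
Proof.
move=> hk; have [c [l Hl]] := psi_form hk.
exact: (SC Hl (psi_min hk)).
Qed.

Lemma lower k : (k <= N)%N -> A k * f (x k) <= psi k (v k).
Proof.
elim: k => [|k IH] hk.
  case: Hrun => HA0 [Hv0 [_ [Hp0 _]]].
  rewrite HA0 Hp0 Hv0 /bregman vsub_self pairing_zeror; lra.
have hk' : (k <= N)%N := ltnW hk.
have Ak0 := A_nonneg hk'.
have [K1 [K2 [_ [K4 _]]]] := step2_facts hk Ak0.
have [_ [_ [Hp _]]] := step3 hk.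
have [S1a S1b] := step1_facts hk'.
have IH' := IH hk'.
have sc := psi_sc hk' (v k.+1).
rewrite Hp K2.
set g := gf (y k) in K4 S1b *.
set r := nrm (vsub (v k.+1) (v k)) in sc.
have -> : vsub (v k.+1) (y k) = vadd (vsub (v k.+1) (v k)) (vsub (v k) (y k)).
  by apply: vext => i; rewrite /vsub /vadd; ring.
rewrite pairing_addr.
have hP := dual_abs Hn g (vsub (v k.+1) (v k)); rewrite -/r in hP.
set P1 := pairing g (vsub (v k.+1) (v k)) in hP *.
set P2 := pairing g (vsub (v k) (y k)) in S1b *.
set Gk := D g in hP K4.
have r0 : 0 <= r by apply: nrm_ge0.
have G0 : 0 <= Gk by apply: dual_ge0.
have h1 : - (Gk * r) <= P1 by have := Rle_abs (- P1); rewrite Rabs_Ropp; lra.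
have h2 : a k.+1 * (- (Gk * r)) <= a k.+1 * P1 by apply: Rmult_le_compat_l; lra.
have h3 : 0 <= a k.+1 * P2 by apply: Rmult_le_pos; lra.
have h4 : A k * f (y k) <= A k * f (x k) by apply: Rmult_le_compat_l.
have h5 : 0 <= (r - a k.+1 * Gk) ^ 2 by apply: pow2_ge_0.
have e5 : (r - a k.+1 * Gk) ^ 2 = r ^ 2 - 2 * (a k.+1 * (Gk * r)) + a k.+1 ^ 2 * Gk ^ 2 by ring.
have e6 : a k.+1 * (- (Gk * r)) = - (a k.+1 * (Gk * r)) by ring.
have e7 : (A k + a k.+1) * (f (y k) - f (x k.+1)) = (A k + a k.+1) * f (y k) - (A k + a k.+1) * f (x k.+1) by ring.
have e8 : a k.+1 * (f (y k) + (P1 + P2)) = a k.+1 * f (y k) + a k.+1 * P1 + a k.+1 * P2 by ring.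
have e9 : (A k + a k.+1) * f (y k) = A k * f (y k) + a k.+1 * f (y k) by ring.
have e10 : a k.+1 ^ 2 / 2 * Gk ^ 2 = / 2 * (a k.+1 ^ 2 * Gk ^ 2) by field.
rewrite K2 in K4.
lra.
Qed.

Lemma upper k : (k <= N)%N -> psi k xs <= A k * f xs + bregman d gd xs x0.
Proof.
elim: k => [|k IH] hk.
  case: Hrun => HA0 [_ [_ [Hp0 _]]].
  rewrite HA0 Hp0; lra.
have hk' : (k <= N)%N := ltnW hk.
have Ak0 := A_nonneg hk'.
have [K1 [K2 _]] := step2_facts hk Ak0.
have [_ [_ [Hp _]]] := step3 hk.
have IH' := IH hk'.
case: Hq => _ [_ Hqc].
have hq := Hqc (y k).
rewrite Hp K2.
have e : pairing (gf (y k)) (vsub xs (y k)) = - pairing (gf (y k)) (vsub (y k) xs).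
  by rewrite !pairing_subr; ring.
rewrite e.
have : a k.+1 * (f (y k) + - pairing (gf (y k)) (vsub (y k) xs)) <= a k.+1 * f xs.
  apply: Rmult_le_compat_l; lra.
lra.
Qed.


Lemma div_le_r a0 b c : 0 < b -> a0 <= c * b -> a0 / b <= c.
Proof.
move=> b0 H; apply: (Rmult_le_reg_r b) => //.
rewrite /Rdiv Rmult_assoc Rinv_l ?Rmult_1_r; lra.
Qed.

Lemma le_div_r a0 b c : 0 < b -> a0 * b <= c -> a0 <= c / b.
Proof.
move=> b0 H; apply: (Rmult_le_reg_r b) => //.
rewrite /Rdiv Rmult_assoc Rinv_l ?Rmult_1_r; lra.
Qed.

Lemma V_ge0 : 0 <= bregman d gd xs x0.
Proof. have := bregman_ge xs x0; have := pow2_ge_0 (nrm (vsub xs x0)); lra. Qed.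

Lemma fmin z : f xs <= f z.
Proof. by case: Hq => _ [H _]. Qed.

Lemma rate k : (1 <= k)%N -> (k <= N)%N ->
  f (x k) - f xs <= 4 * L * bregman d gd xs x0 / INR k ^ 2.
Proof.
move=> k1 hk.
have L0 := L0.
have lo := lower hk; have up := upper hk; have pm := psi_min hk xs.
have Al := A_lower hk.
have K0 : 0 < INR k by apply: lt_0_INR; apply/ltP.
have K2 : 0 < INR k ^ 2 by apply: pow_lt.
have Dl0 : 0 <= f (x k) - f xs by have := fmin (x k); lra.
have e0 : A k * (f (x k) - f xs) = A k * f (x k) - A k * f xs by ring.
have AD : A k * (f (x k) - f xs) <= bregman d gd xs x0 by lra.
apply: le_div_r => //.
have : (f (x k) - f xs) * INR k ^ 2 <= (f (x k) - f xs) * (4 * L * A k) by apply: Rmult_le_compat_l.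
have : (f (x k) - f xs) * (4 * L * A k) = 4 * L * (A k * (f (x k) - f xs)) by ring.
have : 4 * L * (A k * (f (x k) - f xs)) <= 4 * L * bregman d gd xs x0 by apply: Rmult_le_compat_l; lra.
lra.
Qed.

Lemma grad_end : G N ^ 2 / (2 * L) <= f (x N) - f xs.
Proof.
have := sharp_step (y N); have := fmin (vsub (y N) (vscal (D (gf (y N)) / L) (sharp (gf (y N))))).
have [S1a _] := step1_facts (leqnn N).
lra.
Qed.

Lemma final : (1 <= N)%N ->
  (exists k, (uphalf N <= k <= N)%N /\
     (G k) ^ 2 <= 64 * L ^ 2 * bregman d gd xs x0 / (INR N) ^ 3) /\
  f (x N) - f xs <= 4 * L * bregman d gd xs x0 / (INR N) ^ 2.
Proof.
move=> N1.
have L0 := L0.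
set V := bregman d gd xs x0.
have V0 : 0 <= V := V_ge0.
split; last exact: rate.
set m := uphalf N.
have m1 : (1 <= m)%N by rewrite /m uphalf_half; have := odd_double_half N; lia.
have mN : (m <= N)%N by rewrite /m uphalf_half; have := odd_double_half N; lia.
set M := 64 * L ^ 2 * V / INR N ^ 3.
apply: NNPP => hno.
have hall : forall k, (m <= k <= N)%N -> M < G k ^ 2.
  move=> k hk; apply: Rnot_le_lt => hle; apply: hno; exists k; split => //.
have M2 : forall k, (m <= k <= N)%N -> M / (2 * L) < G k ^ 2 / (2 * L).
  move=> k hk; apply: Rmult_lt_compat_r; [apply: Rinv_0_lt_compat; lra | exact: hall].
have claim : forall j, (j <= N - m)%N -> INR j.+1 * (M / (2 * L)) < f (x (N - j)) - f xs.
  elim=> [|j IH] hj.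
    rewrite subn0 /=.
    have := M2 N ltac:(apply/andP; split => //); have := grad_end; lra.
  have IH' := IH (ltnW hj).
  have e : (N - j = (N - j.+1).+1)%N by lia.
  rewrite e in IH'.
  set k := (N - j.+1)%N in IH' *.
  have kN : (k < N)%N by rewrite /k; lia.
  have km : (m <= k <= N)%N by apply/andP; split; rewrite /k; lia.
  have [S1a _] := step1_facts (ltnW kN).
  have Ak0 := A_nonneg (ltnW kN).
  have [_ [_ [_ [_ K5]]]] := step2_facts kN Ak0.
  have := M2 k km.
  rewrite S_INR in IH' *.
  rewrite 2!S_INR; lra.
have := claim (N - m)%N (leqnn _).
have -> : (N - (N - m) = m)%N by lia.
have := rate m1 mN.
set Nr := INR N; set mr := INR m.
have eNm : INR (N - m).+1 = Nr - mr + 1.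
  rewrite S_INR minus_INR; last by apply/leP.
  done.
rewrite eNm.
have Nr1 : 1 <= Nr by rewrite /Nr; apply: (le_INR 1); apply/leP.
have hb : (odd N <= 1)%N := leq_b1 _.
have e2 : (m + m = N + odd N)%N by rewrite /m uphalf_half; have := odd_double_half N; lia.
have := f_equal INR e2; rewrite -!plusE !plus_INR -/Nr -/mr => e3.
have hb' : INR (odd N) <= 1 by apply: (le_INR _ 1); apply/leP.
have hb0 := pos_INR (odd N).
have hm1 : Nr <= 2 * mr by lra.
have hm2 : 2 * mr <= Nr + 1 by lra.
have mr0 : 0 < mr by lra.
have poly : Nr ^ 3 <= 8 * mr ^ 2 * (Nr - mr + 1).
  have p2 : Nr ^ 2 <= (2 * mr) ^ 2 by apply: pow_incr; lra.
  have q2 : Nr <= 2 * (Nr - mr + 1) by lra.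
  have : Nr ^ 2 * Nr <= (2 * mr) ^ 2 * (2 * (Nr - mr + 1)).
    apply: Rmult_le_compat => //; [apply: pow2_ge_0 | lra].
  have -> : Nr ^ 3 = Nr ^ 2 * Nr by ring.
  have -> : 8 * mr ^ 2 * (Nr - mr + 1) = (2 * mr) ^ 2 * (2 * (Nr - mr + 1)) by ring.
  done.
have LV0 : 0 <= 4 * L * V by apply: Rmult_le_pos; lra.
have key : 4 * L * V * Nr ^ 3 <= 32 * L * V * mr ^ 2 * (Nr - mr + 1).
  have := Rmult_le_compat_l _ _ _ LV0 poly.
  have -> : 32 * L * V * mr ^ 2 * (Nr - mr + 1) = 4 * L * V * (8 * mr ^ 2 * (Nr - mr + 1)) by ring.
  done.
have N3 : 0 < Nr ^ 3 by apply: pow_lt; lra.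
have m2 : 0 < mr ^ 2 by apply: pow_lt; lra.
have eM : (Nr - mr + 1) * (M / (2 * L)) = 32 * L * V * mr ^ 2 * (Nr - mr + 1) / Nr ^ 3 / mr ^ 2.
  rewrite /M -/Nr; field; repeat split; lra.
have fin : 4 * L * V / mr ^ 2 <= (Nr - mr + 1) * (M / (2 * L)).
  rewrite eM; apply: Rmult_le_compat_r; first by apply: Rlt_le; apply: Rinv_0_lt_compat.
  exact: le_div_r.
rewrite -/V; lra.
Qed.

End P4.

End P4.

Local Open Scope R_scope.

Theorem mainTheorem4 (n : nat) (nrm : vec n -> R) (sharp : vec n -> vec n)
  (d : vec n -> R) (gd : vec n -> vec n) (f : vec n -> R) (gf : vec n -> vec n)
  (L : R) (xs : vec n) (opt : agm_option) (x0 : vec n) (N : nat)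
  (x v y : nat -> vec n) (A a beta h : nat -> R) (psi : nat -> vec n -> R) :
  is_norm nrm ->
  is_sharp_map nrm sharp ->
  prox_function nrm d gd ->
  L_smooth nrm L f gf ->
  weakly_quasi_convex 1 f gf xs ->
  (1 <= N)%N ->
  AGMsDR_run nrm sharp d gd f gf L opt x0 N x v y A a beta h psi ->
  (exists k, (uphalf N <= k <= N)%N /\
     (dual_norm nrm (gf (y k))) ^ 2 <= 64 * L ^ 2 * bregman d gd xs x0 / (INR N) ^ 3) /\
  f (x N) - f xs <= 4 * L * bregman d gd xs x0 / (INR N) ^ 2.
Proof.
move=> Hn Hs Hd HL Hq HN Hrun.
eapply P4.final; eassumption.
Qed.
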